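(* Let $D$ be a digraph with $\chi(D)>\omega$. Then the one-way infinite directed path $\vec P_\omega$ embeds into $D$. Moreover, if $T$ is any orientation of the rooted tree in which every vertex has countably infinitely many children, then $T$ embeds into $D$.
   Context: A digraph is a pair $D=(V,E)$ with $E\subseteq V^2$ such that $uv\in E$ implies $vu\notin E$. The dichromatic number $\chi(D)$ is the minimal number of acyclic vertex sets (sets inducing no directed cycle) needed to cover the vertex set of $D$. Embedding means as a not necessarily induced subdigraph. An orientation of an undirected graph assigns to each edge exactly one direction. *)

(* Defs.v *)
From Stdlib Require Import List.

Definition is_digraph {V : Type} (E : V -> V -> Prop) : Prop :=
  forall u v, E u v -> ~ E v u.

Definition has_dicycle_in {V : Type} (E : V -> V -> Prop) (A : V -> Prop) : Prop :=
  exists (n : nat) (c : nat -> V),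
    1 <= n /\
    (forall i, i < n -> A (c i)) /\
    (forall i j, i < n -> j < n -> c i = c j -> i = j) /\
    (forall i, S i < n -> E (c i) (c (S i))) /\
    E (c (n - 1)) (c 0).

Definition acyclic_set {V : Type} (E : V -> V -> Prop) (A : V -> Prop) : Prop :=
  ~ has_dicycle_in E A.

(* chi(D) <= omega: V is covered by countably many acyclic sets
   (finitely many can be padded with empty sets). *)
Definition dichromatic_le_omega {V : Type} (E : V -> V -> Prop) : Prop :=
  exists A : nat -> (V -> Prop),
    (forall n, acyclic_set E (A n)) /\ (forall v, exists n, A n v).

Definition dichromatic_gt_omega {V : Type} (E : V -> V -> Prop) : Prop :=
  ~ dichromatic_le_omega E.

Definition ray_embeds {V : Type} (E : V -> V -> Prop) : Prop :=
  exists f : nat -> V,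
    (forall i j, f i = f j -> i = j) /\ (forall i, E (f i) (f (S i))).

(* The rooted tree in which every vertex has countably infinitely many
   children: vertices are finite sequences of naturals (root = nil),
   the children of s are (n :: s) for n : nat.
   An orientation o assigns to each edge {s, n :: s} a direction:
   o s n = true means s -> n :: s, false means n :: s -> s. *)
Definition tree_orientation := list nat -> nat -> bool.

Definition tree_arc (o : tree_orientation) (x y : list nat) : Prop :=
  exists s n, (x = s /\ y = n :: s /\ o s n = true) \/
              (x = n :: s /\ y = s /\ o s n = false).

Definition embeds {W V : Type} (F : W -> W -> Prop) (E : V -> V -> Prop) : Prop :=
  exists f : W -> V,
    (forall x y, f x = f y -> x = y) /\ (forall x y, F x y -> E (f x) (f y)).

(* Main.v *)
Require Import Defs.
From Stdlib Require Import List Arith Lia Classical ClassicalEpsilon.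
From Stdlib Require Cantor.
From mathcomp Require classical_sets boolp.
Import ListNotations.

Lemma zorn_sets (T:Type) (P : (T->Prop)->Prop):
  (forall F : (T -> Prop) -> Prop, (forall X, F X -> P X) ->
     (forall X Y, F X -> F Y -> (forall x, X x -> Y x) \/ (forall x, Y x -> X x)) ->
     P (fun x => exists X, F X /\ X x)) ->
  exists A, P A /\ forall B, (forall x, A x -> B x) -> P B -> forall x, B x -> A x.
Proof.
  intros H.
  destruct (@classical_sets.Zorn_bigcup T P) as [A [PA HA]].
  - intros F FP Ftot.
    assert (E : classical_sets.bigcup F (fun X => X) = (fun x => exists X, F X /\ X x)).
    { apply boolp.funext; intro x; apply boolp.propext; split.
      - intros [X FX Xx]; eauto.
      - intros [X [FX Xx]]; econstructor; eauto. }
    rewrite E. apply H. exact FP. intros X Y FX FY; destruct (Ftot X Y FX FY); auto.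
  - exists A; split; auto.
    intros B AB PB x Bx.
    apply NNPP; intro nA.
    apply (HA B); auto.
    split; [exact AB|]. intro BA. apply nA. apply (BA x Bx).
Qed.

Definition finite_set {A : Type} (P : A -> Prop) := exists L, forall x, P x -> In x L.

Definition dom {A B : Type} (X : A * B -> Prop) (a : A) := exists b, X (a, b).

Lemma chain_dom {A B : Type} (F : (A * B -> Prop) -> Prop) :
  (forall X Y, F X -> F Y -> (forall x, X x -> Y x) \/ (forall x, Y x -> X x)) ->
  forall L (P : A -> Prop), (forall x, P x -> In x L) ->
  (forall x, P x -> dom (fun p => exists X, F X /\ X p) x) -> (exists x, P x) ->
  exists Y, F Y /\ forall x, P x -> dom Y x.
Proof.
  intros Ftot L. induction L as [|a L IH]; intros P PL PU [x0 Px0].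
  - destruct (PL x0 Px0).
  - destruct (classic (exists x, P x /\ In x L)) as [[x1 [Px1 Lx1]]|N].
    + destruct (IH (fun x => P x /\ In x L)) as [Y1 [FY1 HY1]].
      { tauto. } { intros x [Px _]; auto. } { eauto. }
      destruct (classic (P a)) as [Pa|nPa].
      * destruct (PU a Pa) as [b [Ya [FYa Yab]]].
        destruct (Ftot Y1 Ya FY1 FYa) as [S1|S2].
        -- exists Ya; split; auto. intros x Px.
           destruct (PL x Px) as [<-|Lx]; [exists b; auto|].
           destruct (HY1 x (conj Px Lx)) as [b' H']; exists b'; auto.
        -- exists Y1; split; auto. intros x Px.
           destruct (PL x Px) as [<-|Lx]; [exists b; auto|].
           apply HY1; auto.
      * exists Y1; split; auto. intros x Px.
        destruct (PL x Px) as [<-|Lx]; [contradiction|]. apply HY1; auto.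
    + destruct (PL x0 Px0) as [<-|Lx0]; [|exfalso; eauto].
      destruct (PU a Px0) as [b [Ya [FYa Yab]]].
      exists Ya; split; auto. intros x Px.
      destruct (PL x Px) as [<-|Lx]; [exists b; auto|exfalso; eauto].
Qed.

Section Kernel.
Variables (V : Type) (E : V -> V -> Prop).
Hypothesis Hdig : is_digraph E.

Definition arcd (b : bool) (u w : V) := if b then E u w else E w u.

Lemma arcd_irrefl b u : ~ arcd b u u.
Proof. destruct b; simpl; intro H; exact (Hdig _ _ H H). Qed.

Definition Adm (X : V * (bool * list V) -> Prop) : Prop :=
  (forall v d1 d2, X (v, d1) -> X (v, d2) -> d1 = d2) /\
  (forall u b L w, X (u, (b, L)) -> arcd b u w -> In w L \/ dom X w) /\
  (forall P : V -> Prop, finite_set P -> (exists x, P x) -> (forall x, P x -> dom X x) ->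
     exists u b L, P u /\ X (u, (b, L)) /\ forall w, P w -> arcd b u w -> In w L).

Lemma Adm_chain : forall F : (V * (bool * list V) -> Prop) -> Prop, (forall X, F X -> Adm X) ->
     (forall X Y, F X -> F Y -> (forall x, X x -> Y x) \/ (forall x, Y x -> X x)) ->
     Adm (fun x => exists X, F X /\ X x).
Proof.
  intros F FA Ftot. split; [|split].
  - intros v d1 d2 [X1 [F1 H1]] [X2 [F2 H2]].
    destruct (Ftot X1 X2 F1 F2) as [S|S].
    + destruct (FA X2 F2) as [Hf _]. eauto.
    + destruct (FA X1 F1) as [Hf _]. eauto.
  - intros u b L w [X [FX HX]] Ha.
    destruct (FA X FX) as [_ [Hc _]].
    destruct (Hc u b L w HX Ha) as [H|[d Hd]]; auto.
    right; exists d; exists X; auto.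
  - intros P [L PL] Pne PU.
    destruct (chain_dom F Ftot L P PL PU Pne) as [Y [FY HY]].
    destruct (FA Y FY) as [_ [_ HQ]].
    destruct (HQ P (ex_intro _ L PL) Pne HY) as [u [b [L' [Pu [Yu Hu]]]]].
    exists u, b, L'; split; auto; split; auto. exists Y; auto.
Qed.

Lemma kernel_exists : exists M, Adm M /\
  forall v, ~ dom M v -> forall b L, exists w, arcd b v w /\ ~ dom M w /\ ~ In w L.
Proof.
  destruct (zorn_sets _ Adm Adm_chain) as [M [AM Mmax]].
  exists M; split; auto.
  intros v nv b L.
  apply NNPP; intro N.
  assert (HL : forall w, arcd b v w -> ~ dom M w -> In w L).
  { intros w H1 H2. apply NNPP; intro H3. apply N; exists w; auto. }
  clear N.
  set (M' := fun p => M p \/ p = (v, (b, L))).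
  assert (AM' : Adm M').
  { destruct AM as [Af [Ac Aq]]. split; [|split].
    - intros v' d1 d2 [H1|H1] [H2|H2].
      + eauto.
      + inversion H2; subst. exfalso; apply nv; exists d1; auto.
      + inversion H1; subst. exfalso; apply nv; exists d2; auto.
      + inversion H1; inversion H2; subst; auto.
    - intros u b' L' w [H1|H1] Ha.
      + destruct (Ac u b' L' w H1 Ha) as [H|[d Hd]]; auto.
        right; exists d; left; auto.
      + inversion H1; subst.
        destruct (classic (dom M w)) as [[d Hd]|Hn].
        * right; exists d; left; auto.
        * left; auto.
    - intros P PF Pne PU.
      destruct (classic (exists x, P x /\ x <> v)) as [Hne|Hn].
      + set (P' := fun x => P x /\ x <> v).
        assert (PU' : forall x, P' x -> dom M x).
        { intros x [Px xv]. destruct (PU x Px) as [d [Hd|Hd]].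
          - exists d; auto.
          - inversion Hd; subst; contradiction. }
        destruct PF as [L0 HL0].
        destruct (Aq P' (ex_intro _ L0 (fun x Hx => HL0 x (proj1 Hx))) Hne PU')
          as [u [b' [L' [[Pu uv] [Mu Hu]]]]].
        exists u, b', L'; split; auto; split; [left; auto|].
        intros w Pw Ha.
        destruct (classic (w = v)) as [->|wv].
        * destruct (Ac u b' L' v Mu Ha) as [H|H]; auto; contradiction.
        * apply Hu; auto. split; auto.
      + exists v, b, L. destruct Pne as [x Px].
        assert (Pv : P v).
        { destruct (classic (x = v)) as [<-|xv]; auto. exfalso; apply Hn; eauto. }
        split; auto; split; [right; auto|].
        intros w Pw Ha.
        destruct (classic (w = v)) as [->|wv].
        * exfalso; exact (arcd_irrefl _ _ Ha).
        * exfalso; apply Hn; eauto. }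
  apply nv. exists (b, L). apply (Mmax M'); auto.
  - intros x Hx; left; auto.
  - right; auto.
Qed.

End Kernel.
Arguments arcd {V} E b u w.
Arguments arcd_irrefl {V} E Hdig b u.
Arguments Adm {V} E X.
Arguments kernel_exists {V} E Hdig.

Lemma pigeon (l : list nat) d : length l <= d -> exists k, k <= d /\ ~ In k l.
Proof.
  intros Hl. apply NNPP; intro N.
  assert (Hi : incl (seq 0 (S d)) l).
  { intros k Hk. apply in_seq in Hk. apply NNPP; intro Hn. apply N. exists k; split; [lia|auto]. }
  pose proof (NoDup_incl_length (seq_NoDup (S d) 0) Hi). rewrite length_seq in H. lia.
Qed.

Definition eqdec {V : Type} (x y : V) : {x = y} + {x <> y} := excluded_middle_informative (x = y).

Section Color.
Variables (V : Type) (E : V -> V -> Prop).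
Hypothesis Hdig : is_digraph E.

Lemma acyclic_mono (A B : V -> Prop) : acyclic_set E A -> (forall x, B x -> A x) -> acyclic_set E B.
Proof.
  intros HA HBA [n [c [H1 [H2 [H3 [H4 H5]]]]]]. apply HA. exists n, c; repeat split; auto.
Qed.

Lemma cyc_succ n (c : nat -> V) : (forall i, S i < n -> E (c i) (c (S i))) -> E (c (n-1)) (c 0) ->
  forall i, i < n -> exists j, j < n /\ E (c i) (c j).
Proof.
  intros H4 H5 i Hi. destruct (Nat.lt_ge_cases (S i) n).
  - exists (S i); auto.
  - exists 0; split; [lia|]. replace i with (n-1) by lia. auto.
Qed.

Lemma cyc_pred n (c : nat -> V) : (forall i, S i < n -> E (c i) (c (S i))) -> E (c (n-1)) (c 0) ->
  forall i, i < n -> exists j, j < n /\ E (c j) (c i).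
Proof.
  intros H4 H5 i Hi. destruct i as [|i].
  - exists (n-1); split; [lia|auto].
  - exists i; split; [lia|auto].
Qed.

Variables (tau : V -> bool) (F : V -> list V).
Hypothesis HQ : forall P : V -> Prop, finite_set P -> (exists x, P x) ->
  exists u, P u /\ forall w, P w -> arcd E (tau u) u w -> In w (F u).

Lemma finite_color_aux d : forall N (L : list V) (P : V -> Prop), length L <= N ->
  (forall x, P x -> In x L) -> (forall x, P x -> length (F x) = d) ->
  exists q : V -> nat, (forall x, q x <= d) /\ forall k, acyclic_set E (fun x => P x /\ q x = k).
Proof.
  induction N as [|N IH]; intros L P HLN PL PW.
  - exists (fun _ => 0); split; [lia|]. intros k [n [c [H1 [H2 _]]]].
    destruct (H2 0 H1) as [Px _]. destruct L; [destruct (PL _ Px)|simpl in HLN; lia].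
  - destruct (classic (exists x, P x)) as [Pne|Pe].
    2:{ exists (fun _ => 0); split; [lia|]. intros k [n [c [H1 [H2 _]]]].
        destruct (H2 0 H1) as [Px _]. eauto. }
    destruct (HQ P (ex_intro _ L PL) Pne) as [u [Pu Hu]].
    set (P' := fun x => P x /\ x <> u).
    destruct (IH (remove eqdec u L) P') as [q' [Hq'1 Hq'2]].
    { pose proof (remove_length_lt eqdec L u (PL u Pu)). lia. }
    { intros x [Px xu]. apply in_in_remove; auto. }
    { intros x [Px _]; auto. }
    destruct (pigeon (map q' (F u)) d) as [k0 [Hk0 Nk0]].
    { rewrite length_map, (PW u Pu). lia. }
    exists (fun x => if eqdec x u then k0 else q' x). split.
    { intros x; destruct (eqdec x u); auto. }
    intros k [n [c [H1 [H2 [H3 [H4 H5]]]]]].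
    destruct (classic (exists i, i < n /\ c i = u)) as [[i [Hi Hci]]|Hno].
    + assert (Hku : k = k0).
      { destruct (H2 i Hi) as [_ Hk]. rewrite Hci in Hk. destruct (eqdec u u); [auto|congruence]. }
      assert (Hw : exists j, j < n /\ arcd E (tau u) u (c j)).
      { destruct (tau u); simpl.
        - destruct (cyc_succ n c H4 H5 i Hi) as [j [Hj Hij]]. exists j; rewrite <- Hci; auto.
        - destruct (cyc_pred n c H4 H5 i Hi) as [j [Hj Hij]]. exists j; rewrite <- Hci; auto. }
      destruct Hw as [j [Hj Ha]].
      destruct (H2 j Hj) as [Pj Qj].
      assert (cju : c j <> u).
      { intro Heq. rewrite Heq in Ha. exact (arcd_irrefl E Hdig _ _ Ha). }
      destruct (eqdec (c j) u) as [|_]; [contradiction|].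
      apply Nk0. rewrite <- Hku, <- Qj. apply in_map. apply Hu; auto.
    + apply (Hq'2 k). exists n, c; repeat split; auto.
      * apply H2; auto.
      * intro Heq. apply Hno; eauto.
      * destruct (H2 i H) as [_ Hk]. destruct (eqdec (c i) u) as [e|_]; auto.
        exfalso; apply Hno; eauto.
Qed.

End Color.

Section Compact.
Variables (V : Type) (E : V -> V -> Prop).
Hypothesis Hdig : is_digraph E.
Variables (tau : V -> bool) (F : V -> list V).
Hypothesis HQ : forall P : V -> Prop, finite_set P -> (exists x, P x) ->
  exists u, P u /\ forall w, P w -> arcd E (tau u) u w -> In w (F u).
Variable d : nat.
Let W x := length (F x) = d.

Definition FE (C : V * nat -> Prop) : Prop :=
  (forall v k1 k2, C (v, k1) -> C (v, k2) -> k1 = k2) /\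
  (forall v k, C (v, k) -> k <= d) /\
  (forall P : V -> Prop, finite_set P -> (forall x, P x -> W x) ->
     exists q : V -> nat, (forall x, q x <= d) /\ (forall x k, P x -> C (x, k) -> q x = k) /\
       forall k, acyclic_set E (fun x => P x /\ q x = k)).

Lemma fin_col P : finite_set P -> (forall x, P x -> W x) ->
  exists q : V -> nat, (forall x, q x <= d) /\ forall k, acyclic_set E (fun x => P x /\ q x = k).
Proof.
  intros [L PL] PW. exact (finite_color_aux V E Hdig tau F HQ d (length L) L P (le_n _) PL PW).
Qed.

Lemma FE_chain : forall G : (V * nat -> Prop) -> Prop, (forall X, G X -> FE X) ->
     (forall X Y, G X -> G Y -> (forall x, X x -> Y x) \/ (forall x, Y x -> X x)) ->
     FE (fun x => exists X, G X /\ X x).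
Proof.
  intros G GA Gtot.
  assert (Hf : forall v k1 k2, (exists X, G X /\ X (v, k1)) -> (exists X, G X /\ X (v, k2)) -> k1 = k2).
  { intros v d1 d2 [X1 [F1 H1]] [X2 [F2 H2]].
    destruct (Gtot X1 X2 F1 F2) as [S|S].
    + destruct (GA X2 F2) as [Hf _]. eauto.
    + destruct (GA X1 F1) as [Hf _]. eauto. }
  split; [exact Hf|split].
  - intros v k [X [GX HX]]. destruct (GA X GX) as [_ [Hb _]]. eauto.
  - intros P [L PL] PW.
    destruct (classic (exists x, P x /\ dom (fun p => exists X, G X /\ X p) x)) as [Hne|He].
    + destruct (chain_dom G Gtot L (fun x => P x /\ dom (fun p => exists X, G X /\ X p) x))
        as [Y [GY HY]]; auto.
      { intros x [Px _]; auto. } { intros x [_ H]; auto. }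
      destruct (GA Y GY) as [_ [_ H3]].
      destruct (H3 P (ex_intro _ L PL) PW) as [q [Hq1 [Hq2 Hq3]]].
      exists q; split; auto; split; auto.
      intros x k Px Ux.
      destruct (HY x (conj Px (ex_intro _ k Ux))) as [k' Yk'].
      rewrite (Hq2 x k' Px Yk'). apply (Hf x k' k); eauto.
    + destruct (fin_col P (ex_intro _ L PL) PW) as [q [Hq1 Hq2]].
      exists q; split; auto; split; auto.
      intros x k Px Ux. exfalso; apply He; exists x; split; auto; exists k; auto.
Qed.

Lemma colorable : exists c : V -> nat, forall k, acyclic_set E (fun x => W x /\ c x = k).
Proof.
  destruct (zorn_sets _ FE FE_chain) as [C [FC Cmax]].
  assert (Ctot : forall v, W v -> exists k, C (v, k)).
  { intros v Wv. apply NNPP; intro nv.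
    assert (Hbad : forall k, exists PL : (V -> Prop) * list V, k <= d ->
       (forall x, fst PL x -> In x (snd PL)) /\ (forall x, fst PL x -> W x) /\
       forall q : V -> nat, (forall x, q x <= d) ->
         (forall x k', fst PL x -> (C (x, k') \/ (x, k') = (v, k)) -> q x = k') ->
         ~ (forall k'', acyclic_set E (fun x => fst PL x /\ q x = k''))).
    { intros k. destruct (le_lt_dec k d) as [Hk|Hk].
      2:{ exists ((fun _ => False), []); intros; lia. }
      set (Ck := fun p => C p \/ p = (v, k)).
      assert (nFE : ~ FE Ck).
      { intro HF. apply nv. exists k. apply (Cmax Ck); auto.
        - intros x Hx; left; auto.
        - right; auto. }
      destruct FC as [Cf [Cb C3]].
      apply NNPP; intro N. apply nFE. split; [|split].
      - intros v' k1 k2 [H1|H1] [H2|H2].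
        + eauto.
        + inversion H2; subst. exfalso; apply nv; exists k1; auto.
        + inversion H1; subst. exfalso; apply nv; exists k2; auto.
        + inversion H1; inversion H2; subst; auto.
      - intros v' k' [H|H]; eauto. inversion H; subst; auto.
      - intros P [L PL] PW. apply NNPP; intro N2. apply N. exists (P, L). intros _.
        simpl. split; auto; split; auto. intros q Hq1 Hq2 Hq3. apply N2.
        exists q; split; auto; split; auto. }
    destruct (choice _ Hbad) as [PLf HPL].
    set (Ps := fun x => x = v \/ exists k, k <= d /\ fst (PLf k) x).
    destruct FC as [Cf [Cb C3]].
    destruct (C3 Ps) as [q [Hq1 [Hq2 Hq3]]].
    { exists (v :: concat (map (fun j => snd (PLf j)) (seq 0 (S d)))).
      intros x [->|[k [Hk Hx]]]; [left; auto|right].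
      apply in_concat. exists (snd (PLf k)). split.
      - apply (in_map (fun j => snd (PLf j))). apply in_seq. lia.
      - apply (HPL k Hk); auto. }
    { intros x [->|[k [Hk Hx]]]; auto. apply (HPL k Hk); auto. }
    set (k0 := q v).
    destruct (HPL k0 (Hq1 v)) as [_ [_ Hb]].
    apply (Hb q Hq1).
    - intros x k' Px [Ck|Ek].
      + apply Hq2; auto. right; exists k0; split; [apply Hq1|auto].
      + inversion Ek; subst; auto.
    - intros k''. apply (acyclic_mono V E _ _ (Hq3 k'')).
      intros x [Px Qx]; split; auto. right; exists k0; split; [apply Hq1|auto]. }
  assert (Hc : forall v, exists k, W v -> C (v, k)).
  { intros v. destruct (classic (W v)) as [Wv|nWv].
    - destruct (Ctot v Wv) as [k Hk]; exists k; auto.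
    - exists 0; intros; contradiction. }
  destruct (choice _ Hc) as [c Hcc].
  exists c. intros k [n [cy [H1 [H2 [H3 [H4 H5]]]]]].
  set (P := fun x => exists i, i < n /\ x = cy i).
  destruct FC as [Cf [Cb C3]].
  destruct (C3 P) as [q [Hq1 [Hq2 Hq3]]].
  { exists (map cy (seq 0 n)). intros x [i [Hi ->]]. apply in_map. apply in_seq. lia. }
  { intros x [i [Hi ->]]. apply (H2 i Hi). }
  apply (Hq3 k). exists n, cy; repeat split; auto.
  - exists i; auto.
  - destruct (H2 i H) as [Wi ci]. rewrite <- ci. apply Hq2.
    + exists i; auto.
    + apply Hcc; auto.
Qed.

End Compact.

Lemma kernel_nonempty (V : Type) (E : V -> V -> Prop) : is_digraph E -> dichromatic_gt_omega E ->
  exists Z : V -> Prop, (exists v0, Z v0) /\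
    forall v, Z v -> forall b L, exists w, arcd E b v w /\ Z w /\ ~ In w L.
Proof.
  intros Hdig Hgt.
  destruct (kernel_exists E Hdig) as [M [AM HM]].
  exists (fun v => ~ dom M v). split; [|exact HM].
  apply NNPP; intro N.
  assert (Htot : forall v, exists bl, M (v, bl)).
  { intro v. apply NNPP; intro H. apply N. exists v. intros [bl Hb]. apply H; eauto. }
  destruct (choice _ Htot) as [dat Hdat].
  set (tau := fun v => fst (dat v)). set (F := fun v => snd (dat v)).
  destruct AM as [Af [_ Aq]].
  assert (HQ : forall P : V -> Prop, finite_set P -> (exists x, P x) ->
    exists u, P u /\ forall w, P w -> arcd E (tau u) u w -> In w (F u)).
  { intros P PF Pne. destruct (Aq P PF Pne) as [u [b [L [Pu [Mu Hu]]]]].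
    { intros x _. exists (dat x); auto. }
    exists u; split; auto.
    assert (Hd : dat u = (b, L)) by (apply (Af u); auto).
    unfold tau, F; rewrite Hd; simpl; auto. }
  assert (Hcol : forall d, exists c : V -> nat, forall k,
     acyclic_set E (fun x => length (F x) = d /\ c x = k)).
  { intro d. exact (colorable V E Hdig tau F HQ d). }
  destruct (choice _ Hcol) as [cols Hcols].
  apply Hgt.
  exists (fun n v => Cantor.to_nat (length (F v), cols (length (F v)) v) = n).
  split.
  - intros n.
    destruct (Cantor.of_nat n) as [d k] eqn:Hn.
    apply (acyclic_mono V E _ _ (Hcols d k)).
    intros x Hx.
    assert (H' : Cantor.of_nat n = (length (F x), cols (length (F x)) x)).
    { rewrite <- Hx. apply Cantor.cancel_of_to. }
    rewrite Hn in H'. inversion H'; subst. auto.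
  - intros v. eexists; reflexivity.
Qed.

Fixpoint code (s : list nat) : nat :=
  match s with [] => 0 | n :: s' => S (Cantor.to_nat (n, code s')) end.

Fixpoint dec (fuel k : nat) : list nat :=
  match fuel with
  | 0 => []
  | S f => match k with 0 => [] | S j => let (n, m) := Cantor.of_nat j in n :: dec f m end
  end.

Lemma to_nat_ge n m : m <= Cantor.to_nat (n, m).
Proof. pose proof (Cantor.to_nat_non_decreasing n m). lia. Qed.

Lemma dec_code s : forall fuel, code s < fuel -> dec fuel (code s) = s.
Proof.
  induction s as [|n s IH]; intros fuel Hf.
  - destruct fuel; reflexivity.
  - destruct fuel as [|f]; [simpl in Hf; lia|].
    change (dec (S f) (code (n :: s))) with (let (a,b) := Cantor.of_nat (Cantor.to_nat (n, code s)) in a :: dec f b). rewrite Cantor.cancel_of_to. f_equal. apply IH.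
    simpl in Hf. pose proof (to_nat_ge n (code s)). lia.
Qed.

Definition D k := dec (S k) k.
Lemma D_code s : D (code s) = s.
Proof. apply dec_code. lia. Qed.

Lemma code_inj s t : code s = code t -> s = t.
Proof. intros H. rewrite <- (D_code s), <- (D_code t), H. reflexivity. Qed.

Section Tree.
Variables (V : Type) (E : V -> V -> Prop) (Z : V -> Prop) (v0 : V).
Hypothesis Hv0 : Z v0.
Hypothesis HZ : forall v, Z v -> forall b L, exists w, arcd E b v w /\ Z w /\ ~ In w L.
Variable o : tree_orientation.

Lemma ex_pick p b L : exists w, Z p -> Z w /\ arcd E b p w /\ ~ In w L.
Proof.
  destruct (classic (Z p)) as [H|H].
  - destruct (HZ p H b L) as [w Hw]; exists w; intros _; tauto.
  - exists v0; intro; contradiction.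
Qed.

Definition pick p b L := proj1_sig (constructive_indefinite_description _ (ex_pick p b L)).
Lemma pick_spec p b L : Z p -> Z (pick p b L) /\ arcd E b p (pick p b L) /\ ~ In (pick p b L) L.
Proof. unfold pick. destruct (constructive_indefinite_description _ (ex_pick p b L)) as [w Hw]; simpl; auto. Qed.

Definition step (k : nat) (h : list V) : V :=
  match k with
  | 0 => v0
  | S j => let (n, m) := Cantor.of_nat j in pick (nth m h v0) (o (D m) n) h
  end.

Fixpoint hist (k : nat) : list V :=
  match k with 0 => [] | S k' => hist k' ++ [step k' (hist k')] end.

Definition Hv k := step k (hist k).

Lemma hist_len k : length (hist k) = k.
Proof. induction k; simpl; auto. rewrite length_app, IHk; simpl; lia. Qed.

Lemma hist_nth k : forall i, i < k -> nth i (hist k) v0 = Hv i.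
Proof.
  induction k as [|k IH]; intros i Hi; [lia|].
  simpl. destruct (Nat.lt_ge_cases i k).
  - rewrite app_nth1 by (rewrite hist_len; auto). auto.
  - assert (i = k) by lia; subst. rewrite app_nth2 by (rewrite hist_len; lia).
    rewrite hist_len, Nat.sub_diag. reflexivity.
Qed.

Lemma Hv_S j n m : Cantor.of_nat j = (n, m) ->
  Hv (S j) = pick (Hv m) (o (D m) n) (hist (S j)).
Proof.
  intros H. assert (Hm : m < S j).
  { pose proof (Cantor.cancel_to_of j) as Hc. rewrite H in Hc.
    pose proof (to_nat_ge n m). lia. }
  unfold Hv at 1; unfold step; rewrite H. rewrite hist_nth; auto.
Qed.

Lemma Hv_props k : Z (Hv k) /\ ~ In (Hv k) (hist k).
Proof.
  induction k as [k IH] using (well_founded_induction lt_wf).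
  destruct k as [|j].
  - split; [exact Hv0|simpl; auto].
  - destruct (Cantor.of_nat j) as [n m] eqn:Hj.
    assert (Hm : m < S j).
    { pose proof (Cantor.cancel_to_of j) as Hc. rewrite Hj in Hc.
      pose proof (to_nat_ge n m). lia. }
    rewrite (Hv_S j n m Hj). destruct (IH m Hm) as [Zm _].
    destruct (pick_spec (Hv m) (o (D m) n) (hist (S j)) Zm) as [A [B C]]. auto.
Qed.

Lemma Hv_inj i k : Hv i = Hv k -> i = k.
Proof.
  intros H. destruct (Nat.lt_total i k) as [Hik|[Hik|Hik]]; auto; exfalso.
  - apply (proj2 (Hv_props k)). rewrite <- H, <- (hist_nth k i Hik). apply nth_In. rewrite hist_len; auto.
  - apply (proj2 (Hv_props i)). rewrite H, <- (hist_nth i k Hik). apply nth_In. rewrite hist_len; auto.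
Qed.

Lemma tree_embeds : embeds (tree_arc o) E.
Proof.
  exists (fun s => Hv (code s)). split.
  - intros x y H. apply code_inj. apply Hv_inj; auto.
  - intros x y [s [n [[-> [-> Ho]]|[-> [-> Ho]]]]].
    + change (code (n :: s)) with (S (Cantor.to_nat (n, code s))). rewrite (Hv_S _ n (code s)) by apply Cantor.cancel_of_to.
      rewrite D_code.
      destruct (pick_spec (Hv (code s)) (o s n) (hist (S (Cantor.to_nat (n, code s)))) (proj1 (Hv_props _)))
        as [_ [A _]]. rewrite Ho in *. exact A.
    + change (code (n :: s)) with (S (Cantor.to_nat (n, code s))). rewrite (Hv_S _ n (code s)) by apply Cantor.cancel_of_to.
      rewrite D_code.
      destruct (pick_spec (Hv (code s)) (o s n) (hist (S (Cantor.to_nat (n, code s)))) (proj1 (Hv_props _)))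
        as [_ [A _]]. rewrite Ho in *. exact A.
Qed.

End Tree.

Theorem corollary3p2 (V : Type) (E : V -> V -> Prop) :
  is_digraph E -> dichromatic_gt_omega E ->
  ray_embeds E /\ (forall o : tree_orientation, embeds (tree_arc o) E).
Proof.
  intros Hdig Hgt.
  destruct (kernel_nonempty V E Hdig Hgt) as [Z [[v0 Hv0] HZ]].
  assert (T : forall o, embeds (tree_arc o) E) by (intro o; exact (tree_embeds V E Z v0 Hv0 HZ o)).
  split; auto.
  destruct (T (fun _ _ => true)) as [f [Hi Ha]].
  exists (fun i => f (repeat 0 i)). split.
  - intros i j H. apply Hi in H.
    rewrite <- (repeat_length 0 i), <- (repeat_length 0 j), H; auto.
  - intros i. apply Ha. exists (repeat 0 i), 0. left. auto.
Qed.
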